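(* Let $I\subset S=K[x_1,\dots,x_t]$ be an $\mathfrak m$-primary monomial ideal with $x_i^{a_i}\in\mathscr G(I)$, $a_i\in\mathbb Z_{>0}$, for $i=1,\dots,t$. Then $I=\langle x_1^{a_1},\dots,x_t^{a_t}\rangle$ if and only if $v(I)=\sum_{i=1}^t a_i-t$.
   Context: $K$ is a field, $S$ is standard graded and $\mathfrak m=\langle x_1,\dots,x_t\rangle$. For a proper graded ideal $I$, the $v$-number is $v(I)=\min\{k\ge 0 : \exists f\in S_k,\ \mathcal P\in\operatorname{Ass}(S/I) \text{ with } (I:f)=\mathcal P\}$. $\mathscr G(I)$ is the minimal monomial generating set of the monomial ideal $I$. *)

(* Defs.v *)
From HB Require Import structures.
From mathcomp Require Import all_boot all_order all_algebra.
From mathcomp Require Import mpoly.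
Set Implicit Arguments. Unset Strict Implicit. Unset Printing Implicit Defensive.
Import GRing.Theory.
Local Open Scope ring_scope.

Section Defs.
Variables (K : fieldType) (t : nat).
Local Notation S := {mpoly K[t]}.

Definition pset := S -> Prop.

Definition is_ideal (I : pset) : Prop :=
  [/\ I 0, (forall f g, I f -> I g -> I (f + g)) & (forall f g, I g -> I (f * g))].

Definition ideal_gen (A : pset) : pset := fun f =>
  exists s : seq (S * S), (forall p, p \in s -> A p.2) /\
                          f = \sum_(p <- s) p.1 * p.2.

Definition monomial (m : 'X_{1..t}) : S := 'X_[m].

Definition is_monomial_ideal (I : pset) : Prop :=
  is_ideal I /\ forall f, I f <-> ideal_gen (fun g => exists m, g = monomial m /\ I g) f.

Definition mdiv (m1 m2 : 'X_{1..t}) : Prop := forall i, (m1 i <= m2 i)%N.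

Definition in_mingens (I : pset) (m : 'X_{1..t}) : Prop :=
  I (monomial m) /\ forall m', I (monomial m') -> mdiv m' m -> m' = m.

Definition maxideal : pset := ideal_gen (fun g => exists i : 'I_t, g = 'X_i).

Definition radical (I : pset) : pset := fun f => exists k : nat, I (f ^+ k).

Definition is_proper (I : pset) : Prop := ~ I 1.

Definition is_primary (I : pset) : Prop :=
  [/\ is_ideal I, is_proper I &
      forall f g, I (f * g) -> ~ I f -> radical I g].

Definition is_m_primary (I : pset) : Prop :=
  is_primary I /\ forall f, radical I f <-> maxideal f.

Definition is_prime (P : pset) : Prop :=
  [/\ is_ideal P, is_proper P & forall f g, P (f * g) -> P f \/ P g].

Definition colon (I : pset) (f : S) : pset := fun g => I (g * f).

Definition eq_pset (A B : pset) : Prop := forall f, A f <-> B f.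

Definition is_ass (I : pset) (P : pset) : Prop :=
  is_prime P /\ exists g : S, eq_pset (colon I g) P.

Definition homog_deg (k : nat) (f : S) : Prop :=
  forall m, m \in msupp f -> mdeg m = k.

Definition vnum_witness (I : pset) (k : nat) : Prop :=
  exists f : S, exists P : pset, homog_deg k f /\ is_ass I P /\ eq_pset (colon I f) P.

Definition is_vnumber (I : pset) (v : nat) : Prop :=
  vnum_witness I v /\ forall k, vnum_witness I k -> (v <= k)%N.

End Defs.

(* Main.v *)
Require Import Defs.
From mathcomp Require Import all_boot all_order all_algebra.
From mathcomp Require Import mpoly zify.
From Stdlib Require Import Classical.
Set Implicit Arguments. Unset Strict Implicit.
Import GRing.Theory.
Local Open Scope ring_scope.

Section H.
Variables (K : fieldType) (t : nat).
Local Notation S := {mpoly K[t]}.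
Implicit Types (I A : pset K t) (f g : S).

Lemma ideal_sum I (T : eqType) (r : seq T) (F : T -> S) :
  is_ideal I -> (forall x, x \in r -> I (F x)) -> I (\sum_(x <- r) F x).
Proof.
move=> [H0 HD HM]; elim: r => [|x r IH] Hr; first by rewrite big_nil.
rewrite big_cons; apply: HD; first by apply: Hr; rewrite mem_head.
by apply: IH => y Hy; apply: Hr; rewrite in_cons Hy orbT.
Qed.

Lemma ideal_gen_ideal A : is_ideal (ideal_gen A).
Proof.
split.
- by exists [::]; split => //; rewrite big_nil.
- move=> f g [s1 [H1 ->]] [s2 [H2 ->]]; exists (s1 ++ s2); split; last by rewrite big_cat.
  by move=> p; rewrite mem_cat => /orP [/H1|/H2].
- move=> f g [s [H ->]]; exists [seq (f * p.1, p.2) | p <- s]; split.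
    by move=> p /mapP [q Hq ->] /=; apply: H.
  by rewrite big_map mulr_sumr; apply: eq_bigr => p _; rewrite mulrA.
Qed.

Lemma ideal_gen_in A g : A g -> ideal_gen A g.
Proof.
by move=> Ag; exists [:: (1, g)]; split; [move=> p; rewrite mem_seq1 => /eqP -> | rewrite big_seq1 mul1r].
Qed.

Lemma ideal_gen_sub A I : is_ideal I -> (forall g, A g -> I g) ->
  forall f, ideal_gen A f -> I f.
Proof.
move=> HI HA f [s [Hs ->]]; apply: ideal_sum => // p /Hs /HA.
by case: HI => _ _; apply.
Qed.

Lemma msuppMX_le (p : S) (m0 m : 'X_{1..t}) : m \in msupp (p * 'X_[m0]) -> (m0 <= m)%MM.
Proof.
rewrite (perm_mem (msuppMX p m0)) => /mapP [m' _ ->]; exact: lem_addr.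
Qed.

Lemma genA (A : pset K t) (Q : 'X_{1..t} -> Prop) f m :
  (forall g, A g -> exists m0, g = 'X_[m0] /\ Q m0) ->
  ideal_gen A f -> m \in msupp f -> exists m0, Q m0 /\ (m0 <= m)%MM.
Proof.
move=> HA [s [Hs ->]] Hm; apply: NNPP => Hn; move: Hm.
rewrite mcoeff_msupp raddf_sum /= big_seq big1 ?eqxx // => p /Hs /HA [m0 [-> Qm0]].
case E: (m \in msupp (p.1 * 'X_[m0])).
  by exfalso; apply: Hn; exists m0; split => //; apply: msuppMX_le E.
by move: E; rewrite mcoeff_msupp => /negbFE/eqP.
Qed.

Lemma mono_mul I (m m' : 'X_{1..t}) : is_ideal I -> I 'X_[m] -> (m <= m')%MM -> I 'X_[m'].
Proof.
move=> [_ _ HM] Hm Hle; rewrite -(submK Hle) mpolyXD; exact: HM.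
Qed.

Lemma supp_in I f m : is_monomial_ideal I -> I f -> m \in msupp f -> I 'X_[m].
Proof.
move=> [HI Hgen] /Hgen Hf Hm.
have [|m0 [Hm0 Hle]] := @genA _ (fun m0 => I 'X_[m0]) _ _ _ Hf Hm.
  by move=> g [m1 [e Ig]]; exists m1; split => //; rewrite -/(monomial K m1) -e.
exact: mono_mul Hm0 Hle.
Qed.

Lemma supp_all I f : is_ideal I -> (forall m, m \in msupp f -> I 'X_[m]) -> I f.
Proof.
move=> HI H; rewrite (mpolyE f); apply: ideal_sum => // m Hm.
rewrite -mul_mpolyC; case: HI => _ _; apply; exact: H.
Qed.

Lemma max_coef0 g : maxideal g -> g@_0 = 0.
Proof.
move=> Hg; apply/eqP; apply: contraT; rewrite -mcoeff_msupp => Hm.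
have [|m0 [[i ->] /mnm_lepP /(_ i)]] := @genA _ (fun m0 => exists i : 'I_t, m0 = U_(i)%MM) _ _ _ Hg Hm.
  by move=> h [i ->]; exists U_(i)%MM; split => //; exists i.
by rewrite mnm1E eqxx mnm0E.
Qed.

Lemma coef0_max g : g@_0 = 0 -> maxideal g.
Proof.
move=> H0; rewrite (mpolyE g); apply: ideal_sum; first exact: ideal_gen_ideal.
move=> m Hm.
have [i Hi] : exists i, (0 < m i)%N.
  apply: NNPP => Hn; move: Hm; rewrite mcoeff_msupp.
  suff -> : m = 0%MM by rewrite H0 eqxx.
  apply/mnmP => i; rewrite mnm0E; apply/eqP; rewrite -leqn0 leqNgt; apply/negP => Hi; apply: Hn; by exists i.
have Hle : (U_(i) <= m)%MM by apply/mnm_lepP => j; rewrite mnm1E; case: eqP => // <-.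
rewrite -[X in 'X_[X]](submK Hle) mpolyXD scalerAl.
case: (ideal_gen_ideal (fun g => exists i : 'I_t, g = 'X_i)) => _ _; apply.
by apply: ideal_gen_in; exists i.
Qed.

Lemma max_prime : is_prime (@maxideal K t).
Proof.
split; first exact: ideal_gen_ideal.
  by move/max_coef0/eqP; rewrite mcoeff1 eqxx oner_eq0.
move=> f g /max_coef0; rewrite (rmorphM (mcoeff 0)) => /eqP; rewrite mulf_eq0 => /orP [] /eqP H.
  by left; apply: coef0_max.
by right; apply: coef0_max.
Qed.

Lemma socle I (b : 'X_{1..t}) : is_monomial_ideal I -> ~ I 'X_[b] ->
  (forall i, I 'X_[b + U_(i)]) -> eq_pset (colon I 'X_[b]) (@maxideal K t).
Proof.
move=> HMI Hb Hs g; split.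
- move=> Hg; apply: NNPP => Hn; apply: Hb; apply: (@supp_in I (g * 'X_[b]) b HMI Hg).
  rewrite mcoeff_msupp -[X in _@_X]addm0 mcoeffMX.
  by apply/eqP => H0; apply: Hn; apply: coef0_max.
- have HI := HMI.1.
  have Hc : is_ideal (colon I 'X_[b]).
    case: HI => H0 HD HM; split; rewrite /colon.
    + by rewrite mul0r.
    + by move=> f h Hf Hh; rewrite mulrDl; apply: HD.
    + by move=> f h Hh; rewrite -mulrA; apply: HM.
  apply: ideal_gen_sub => // h [i ->]; rewrite /colon -mpolyXD addmC; exact: Hs.
Qed.

Lemma gen_le I (i : 'I_t) n (m : 'X_{1..t}) : is_ideal I -> I 'X_[U_(i) *+ n] -> (n <= m i)%N -> I 'X_[m].
Proof.
move=> HI H Hn; apply: mono_mul HI H _; apply/mnm_lepP => j.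
rewrite mulmnE mnm1E; case: eqP => [<-|_]; by rewrite ?mul1n ?mul0n.
Qed.

Lemma ltn_sum_ex (x y : 'I_t -> nat) i : (forall j, x j <= y j)%N -> (x i < y i)%N ->
  ((\sum_j x j)%N < (\sum_j y j)%N)%N.
Proof.
move=> Hle Hi; rewrite (bigD1 i) //= [X in (_ < X)%N](bigD1 i) //=.
by rewrite -addSn; apply: leq_add => //; apply: leq_sum.
Qed.

Lemma sumpred (a : 'I_t -> nat) : (forall i, 0 < a i)%N ->
  ((\sum_i (a i).-1)%N = (\sum_i a i)%N - t)%N.
Proof.
move=> Ha; have: (\sum_i (a i).-1 + t = \sum_i a i)%N.
  rewrite -[X in (_ + X)%N]card_ord -sum1_card -big_split /=.
  by apply: eq_bigr => i _; rewrite addn1 prednK.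
move=> <-; by rewrite addnK.
Qed.

Lemma prime_pow (P : pset K t) x n : is_prime P -> P (x ^+ n) -> P x.
Proof.
move=> [_ Hp HP]; elim: n => [|n IH]; first by rewrite expr0.
by rewrite exprS => /HP [] // /IH.
Qed.

Lemma descent I (a : 'I_t -> nat) : is_ideal I -> (forall i, I 'X_[U_(i) *+ a i]) ->
  forall n (b : 'X_{1..t}), ((\sum_i a i)%N - mdeg b <= n)%N -> (forall i, b i < a i)%N -> ~ I 'X_[b] ->
  exists b' : 'X_{1..t}, (forall i, b' i < a i)%N /\ ~ I 'X_[b'] /\ forall i, I 'X_[b' + U_(i)].
Proof.
move=> HI Ha; elim=> [|n IH] b Hn Hbox Hb;
  (case: (classic (forall i, I 'X_[b + U_(i)])) => [Hall|]; first by exists b);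
  move/not_all_ex_not => [i Hi].
- have : (mdeg b < (\sum_i a i)%N)%N.
    rewrite mdegE; exact: (@ltn_sum_ex _ _ i (fun j => ltnW (Hbox j)) (Hbox i)).
  lia.
- have Hbi : (b i + 1 < a i)%N.
    rewrite ltnNge; apply/negP => Hge; apply: Hi; apply: (gen_le HI (Ha i)).
    by rewrite mnmDE mnm1E eqxx.
  apply: (IH (b + U_(i))%MM) => //.
  + have : (mdeg b < (\sum_i a i)%N)%N by rewrite mdegE; exact: (@ltn_sum_ex _ _ i (fun j => ltnW (Hbox j)) (Hbox i)).
    rewrite mdegD mdeg1; lia.
  + move=> j; rewrite mnmDE mnm1E; case: eqP => [<-|_]; [exact: Hbi | by rewrite addn0].
Qed.

End H.

Unset Implicit Arguments. Set Strict Implicit.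

Theorem corollary4p4 (K : fieldType) (t : nat) (I : pset K t) (a : 'I_t -> nat) :
  is_monomial_ideal I ->
  is_m_primary I ->
  (forall i, (0 < a i)%N) ->
  (forall i, in_mingens I (U_(i) *+ a i)%MM) ->
  (eq_pset I (ideal_gen (fun g => exists i : 'I_t, g = 'X_i ^+ a i))
   <-> is_vnumber I ((\sum_(i < t) a i) - t)%N).
Proof.
move=> HMI [[_ Hprop _] _] Hapos Hmin.
have HI := HMI.1.
set J := ideal_gen _.
have HJ : is_ideal J := ideal_gen_ideal _.
have HaI : forall i, I 'X_[U_(i) *+ a i] := fun i => (Hmin i).1.
have HaJ : forall i, J 'X_[U_(i) *+ a i].
  by move=> i; apply: ideal_gen_in; exists i; rewrite mpolyXn.
have Jmem : forall m, J 'X_[m] -> exists i, (a i <= m i)%N.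
  move=> m Hm.
  have HA : forall g : {mpoly K[t]}, (exists i : 'I_t, g = 'X_i ^+ a i) -> exists m0, g = 'X_[m0] /\ (exists i, m0 = (U_(i) *+ a i)%MM).
    by move=> g [i ->]; exists (U_(i) *+ a i)%MM; split; [rewrite mpolyXn | exists i].
  have Hmm : m \in msupp ('X_[m] : {mpoly K[t]}) by rewrite msuppX mem_seq1.
  have [m0 [[i ->] /mnm_lepP Hle]] := genA HA Hm Hmm.
  by exists i; move: (Hle i); rewrite mulmnE mnm1E eqxx mul1n.
have JI : forall f, J f -> I f.
  by apply: ideal_gen_sub => // g [i ->]; rewrite mpolyXn.
set btop : 'X_{1..t} := [multinom (a i).-1 | i < t].
have btopE : forall i, btop i = (a i).-1 by move=> i; rewrite mnmE.
have mdeg_btop : mdeg btop = ((\sum_(i < t) a i) - t)%N.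
  by rewrite mdegE -sumpred //; apply: eq_bigr => i _; rewrite btopE.
split.
- move=> HIJ.
  have Imem : forall m, I 'X_[m] <-> exists i, (a i <= m i)%N.
    move=> m; split; first by move/HIJ/Jmem.
    by move=> [i Hi]; apply: gen_le HI (HaI i) Hi.
  split.
  + exists 'X_[btop], (@maxideal K t).
    have Hsoc : eq_pset (colon I 'X_[btop]) (@maxideal K t).
      apply: socle => //.
      * move/Imem => [i]; rewrite btopE; have := Hapos i; lia.
      * move=> i; apply/Imem; exists i; rewrite mnmDE mnm1E eqxx btopE; have := Hapos i; lia.
    split; last split => //.
    * by move=> m; rewrite msuppX mem_seq1 => /eqP ->.
    * by split; [exact: max_prime | exists 'X_[btop]].
  + move=> k [f [P [Hhom [[HP _] Hcol]]]].
    have HPp := HP; case: HPp => _ HPprop _.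
    have IP : forall g : {mpoly K[t]}, I g -> P g.
      by move=> g Ig; apply/Hcol; rewrite /colon mulrC; case: HI => _ _; apply.
    have XP : forall i, I ('X_i * f).
      move=> i; have : P 'X_i by apply: (prime_pow (n := a i)) => //; apply: IP; rewrite mpolyXn.
      by move/Hcol; rewrite /colon mulrC.
    have nIf : ~ I f by move=> If; apply: HPprop; apply/Hcol; rewrite /colon mul1r.
    have [b [Hb nIb]] : exists b, b \in msupp f /\ ~ I 'X_[b].
      apply: NNPP => Hn; apply: nIf; apply: supp_all => // m Hm.
      by apply: NNPP => Hm'; apply: Hn; exists m.
    have Hbox : forall j, (b j < a j)%N.
      move=> j; rewrite ltnNge; apply/negP => Hj; apply: nIb; apply/Imem; by exists j.
    have Hbi : forall i, b i = (a i).-1.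
      move=> i; have : I 'X_[U_(i) + b].
        apply: (@supp_in _ _ I ('X_i * f)) => //; rewrite mulrC mcoeff_msupp mcoeffMX -mcoeff_msupp //.
      move/Imem => [j]; rewrite mnmDE mnm1E; case: eqP => [<-|_].
      * have := Hbox i; lia.
      * have := Hbox j; lia.
    rewrite -(Hhom b Hb) -mdeg_btop mdegE [X in (_ <= X)%N]mdegE.
    by apply: leq_sum => i _; rewrite Hbi btopE.
- move=> [_ Hmin'].
  apply: NNPP => Hne.
  have [f [If nJf]] : exists f, I f /\ ~ J f.
    apply: NNPP => Hn; apply: Hne => f; split; last exact: JI.
    by move=> If; apply: NNPP => nJ; apply: Hn; exists f.
  have [c [Hc nJc]] : exists c, c \in msupp f /\ ~ J 'X_[c].
    apply: NNPP => Hn; apply: nJf; apply: supp_all => // m Hm.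
    by apply: NNPP => Hm'; apply: Hn; exists m.
  have Ic : I 'X_[c] := supp_in HMI If Hc.
  have Hcbox : forall i, (c i < a i)%N.
    move=> i; rewrite ltnNge; apply/negP => Hi; apply: nJc; exact: gen_le HJ (HaJ i) Hi.
  have Itop : I 'X_[btop].
    apply: mono_mul HI Ic _; apply/mnm_lepP => i; rewrite btopE; have := Hcbox i; lia.
  have H0box : forall i, (0%MM i < a i)%N by move=> i; rewrite mnm0E.
  have nI0 : ~ I 'X_[0%MM] by rewrite mpolyX0.
  have [b' [Hbox [nIb Hsoc]]] := descent HI HaI (leqnn _) H0box nI0.
  have := Hmin' (mdeg b').
  have -> : (\sum_(i < t) a i - t = mdeg btop)%N by rewrite mdeg_btop.
  have Hlt : (mdeg b' < mdeg btop)%N.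
    have [i Hi] : exists i, (b' i < btop i)%N.
      apply: NNPP => Hn; apply: nIb.
      suff -> : b' = btop by [].
      apply/mnmP => i; apply/eqP; rewrite eqn_leq; apply/andP; split.
        by rewrite btopE; have := Hbox i; lia.
      by rewrite leqNgt; apply/negP => Hi; apply: Hn; exists i.
    rewrite !mdegE; apply: (ltn_sum_ex (i := i) _ Hi) => j; rewrite btopE; have := Hbox j; lia.
  have Hw : vnum_witness I (mdeg b').
    exists 'X_[b'], (@maxideal K t).
    have Hs : eq_pset (colon I 'X_[b']) (@maxideal K t) by apply: socle.
    split; last split => //.
    * by move=> m; rewrite msuppX mem_seq1 => /eqP ->.
    * by split; [exact: max_prime | exists 'X_[b']].
  move/(_ Hw); rewrite leqNgt Hlt //.
Qed.
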